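(* With notation as in the context (type $E_6$ over $\mathbb{Z}/3$), let $s\in\{1,3,4,5,6\}$ and let $x\ne y$ be elements of $\Gamma_s^+$. Then $(x|y)=0$ if and only if $x$ and $y$ agree in exactly one of their five coordinates.
   Context: Let $V=(\mathbb{Z}/3)^5$ with the standard symmetric form $\sum_i x_iy_i$. Let $\Delta$ be the root system of type $E_6$ with simple roots $\alpha_1,\dots,\alpha_6$, $\langle\alpha_i,\alpha_i\rangle=2$, $\langle\alpha_i,\alpha_j\rangle=-1$ if $\{i,j\}\in\{\{1,3\},\{3,4\},\{4,5\},\{5,6\},\{2,4\}\}$, $0$ otherwise; $\Lambda=\bigoplus\mathbb{Z}\alpha_i$, $\Delta^+$ the positive roots. Let $f:\Lambda\to V$ be the group homomorphism with $f(\alpha_1)=(1,2,0,0,0)$, $f(\alpha_2)=(0,0,0,1,2)$, $f(\alpha_3)=(0,1,2,0,0)$, $f(\alpha_4)=(0,0,1,2,0)$, $f(\alpha_5)=(0,0,0,1,1)$, $f(\alpha_6)=(1,1,1,1,1)$. For $\beta=\sum\beta^i\alpha_i\in\Delta^+$ let $m(\beta)=\max\{i:\beta^i\ne0\}$; set $\Delta_1^+=\{\alpha_1\}$, $\Delta_3^+=\{\beta: m(\beta)\in\{2,3\}\}$, $\Delta_s^+=\{\beta: m(\beta)=s\}$ for $s=4,5,6$, and $\Gamma_s^+=f(\Delta_s^+)$. *)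

(* Defs.v *)
From mathcomp Require Import all_boot all_order all_algebra.
Set Implicit Arguments. Unset Strict Implicit. Unset Printing Implicit Defensive.
Import GRing.Theory Num.Theory.
Local Open Scope ring_scope.

(* Simple roots alpha_1..alpha_6 are indexed by 'I_6 as 0..5 (alpha_{i+1} ~ i).
   Coordinates of V = (Z/3)^5 are indexed by 'I_5. *)

Definition e6_edge (i j : nat) : bool :=
  [|| (i, j) == (0, 2)%N, (i, j) == (2, 3)%N, (i, j) == (3, 4)%N,
      (i, j) == (4, 5)%N | (i, j) == (1, 3)%N].

Definition e6_gram (i j : 'I_6) : int :=
  if i == j then 2 else if e6_edge i j || e6_edge j i then -1 else 0.

(* An element of Lambda, given by its coefficients beta^i (positive roots
   have nonnegative coefficients, so nat coefficients suffice). *)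
Definition e6_form (b c : 'I_6 -> nat) : int :=
  \sum_(i < 6) \sum_(j < 6) (b i)%:Z * (c j)%:Z * e6_gram i j.

(* Positive roots of E6: the nonzero elements of Lambda with nonnegative
   coefficients and norm 2 (root system of the simply-laced lattice). *)
Definition is_pos_root (b : 'I_6 -> nat) : bool :=
  [exists i, b i != 0%N] && (e6_form b b == 2).

(* m(beta) = max{ i : beta^i <> 0 }, with 1-based labels. *)
Definition mroot (b : 'I_6 -> nat) : nat := \max_(i < 6 | b i != 0%N) i.+1.

Definition in_Delta (s : nat) (b : 'I_6 -> nat) : bool :=
  is_pos_root b &&
  (if s == 1%N then [forall i, b i == (i == 0 :> nat)]
   else if s == 3%N then (mroot b == 2%N) || (mroot b == 3%N)
   else mroot b == s).

(* Images of the simple roots under f, as natural representatives. *)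
Definition f_simple (i : 'I_6) (k : 'I_5) : nat :=
  nth 0%N (nth [::] [:: [:: 1; 2; 0; 0; 0];
                        [:: 0; 0; 0; 1; 2];
                        [:: 0; 1; 2; 0; 0];
                        [:: 0; 0; 1; 2; 0];
                        [:: 0; 0; 0; 1; 1];
                        [:: 1; 1; 1; 1; 1]]%N i) k.

Definition V := {ffun 'I_5 -> 'Z_3}.

Definition fmap (b : 'I_6 -> nat) : V :=
  [ffun k => \sum_(i < 6) ((f_simple i k)%:R : 'Z_3) *+ b i].

Definition vform (x y : V) : 'Z_3 := \sum_(k < 5) x k * y k.

Definition nagree (x y : V) : nat := #|[set k | x k == y k]|.

(* Main.v *)
Require Import Defs.
From Stdlib Require Import ZArith Lia FunctionalExtensionality.
From mathcomp Require Import all_boot all_order all_algebra zify.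
Import GRing.Theory Num.Theory.
Section ZPart.
Local Open Scope Z_scope.
Definition qZ x0 x1 x2 x3 x4 x5 :=
  2*(x0*x0+x1*x1+x2*x2+x3*x3+x4*x4+x5*x5) - 2*(x0*x2+x2*x3+x3*x4+x4*x5+x1*x3).
Lemma sosb x0 x1 x2 x3 x4 x5 (w0 w1 w2 w3 w4 w5 : Z) :
  let y0 := 6*x0 - w0 in let y1 := 6*x1 - w1 in let y2 := 6*x2 - w2 in
  let y3 := 6*x3 - w3 in let y4 := 6*x4 - w4 in let y5 := 6*x5 - w5 in
  0 <= 6 * qZ y0 y1 y2 y3 y4 y5.
Proof.
assert (S : forall a, 0 <= a*a) by (intro a; apply Z.square_nonneg).
intros.
assert (6 * qZ y0 y1 y2 y3 y4 y5 = 3*(2*y0-y2)*(2*y0-y2) + 3*(2*y5-y4)*(2*y5-y4) + 3*(2*y1-y3)*(2*y1-y3)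
  + (3*y2-2*y3)*(3*y2-2*y3) + (3*y4-2*y3)*(3*y4-2*y3) + y3*y3) as -> by (unfold qZ; ring).
pose proof (S (2*y0-y2)); pose proof (S (2*y5-y4)); pose proof (S (2*y1-y3)); pose proof (S (3*y2-2*y3)); pose proof (S (3*y4-2*y3)); pose proof (S y3); lia.
Qed.
Lemma boundZ x0 x1 x2 x3 x4 x5 : qZ x0 x1 x2 x3 x4 x5 = 2 ->
  x0 <= 3 /\ x1 <= 3 /\ x2 <= 3 /\ x3 <= 3 /\ x4 <= 3 /\ x5 <= 3.
Proof.
intro H.
pose proof (sosb x0 x1 x2 x3 x4 x5 4 3 5 6 4 2) as H0.
pose proof (sosb x0 x1 x2 x3 x4 x5 3 6 6 9 6 3) as H1.
pose proof (sosb x0 x1 x2 x3 x4 x5 5 6 10 12 8 4) as H2.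
pose proof (sosb x0 x1 x2 x3 x4 x5 6 9 12 18 12 6) as H3.
pose proof (sosb x0 x1 x2 x3 x4 x5 4 6 8 12 10 5) as H4.
pose proof (sosb x0 x1 x2 x3 x4 x5 2 3 4 6 5 4) as H5.
cbv zeta in *. unfold qZ in *. nia.
Qed.
End ZPart.
Set Implicit Arguments. Unset Strict Implicit. Unset Printing Implicit Defensive.
Local Open Scope ring_scope.

Definition bl (t : seq nat) : 'I_6 -> nat := fun i => nth 0%N t i.
Definition gramN (i j : nat) : int :=
  if i == j then 2 else if e6_edge i j || e6_edge j i then -1 else 0.
Definition formN (t u : seq nat) : int :=
  \sum_(0 <= i < 6) \sum_(0 <= j < 6) (nth 0%N t i)%:Z * (nth 0%N u j)%:Z * gramN i j.
Definition posN t := has (fun i => nth 0%N t i != 0%N) (iota 0 6) && (formN t t == 2).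
Definition mrootN t := (\max_(0 <= i < 6 | nth 0%N t i != 0%N) i.+1)%N.
Definition inDN s t := posN t &&
  (if s == 1%N then all (fun i => nth 0%N t i == (i == 0%N)) (iota 0 6)
   else if s == 3%N then (mrootN t == 2%N) || (mrootN t == 3%N)
   else mrootN t == s).
Definition fsN (i k : nat) : nat :=
  nth 0%N (nth [::] [:: [:: 1; 2; 0; 0; 0];
                        [:: 0; 0; 0; 1; 2];
                        [:: 0; 1; 2; 0; 0];
                        [:: 0; 0; 1; 2; 0];
                        [:: 0; 0; 0; 1; 1];
                        [:: 1; 1; 1; 1; 1]]%N i) k.
Definition fN t k : 'Z_3 := \sum_(0 <= i < 6) ((fsN i k)%:R : 'Z_3) *+ nth 0%N t i.
Definition veqN t u := all (fun k => fN t k == fN u k) (iota 0 5).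
Definition vformN t u := \sum_(0 <= k < 5) fN t k * fN u k.
Definition nagN t u := (\sum_(0 <= k < 5 | fN t k == fN u k) 1)%N.

Lemma L1 t u : e6_form (bl t) (bl u) = formN t u.
Proof.
rewrite /e6_form /formN big_mkord; apply: eq_bigr => i _.
rewrite big_mkord; apply: eq_bigr => j _; by [].
Qed.

Lemma L2 t : is_pos_root (bl t) = posN t.
Proof.
rewrite /is_pos_root /posN L1; congr (_ && _).
apply/existsP/hasP => [[i Hi]|[i]].
  by exists (val i) => //; rewrite mem_iota /= ltn_ord.
by rewrite mem_iota /= => Hi H; exists (Ordinal Hi).
Qed.

Lemma L3 t : mroot (bl t) = mrootN t.
Proof. by rewrite /mroot /mrootN big_mkord. Qed.

Lemma L4 s t : in_Delta s (bl t) = inDN s t.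
Proof.
rewrite /in_Delta /inDN L2 L3; congr (_ && _).
case: ifP => // _; apply/forallP/allP => [H i|H i].
  by rewrite mem_iota /= => Hi; exact: (H (Ordinal Hi)).
by apply: H; rewrite mem_iota /= ltn_ord.
Qed.

Lemma L5 t (k : 'I_5) : fmap (bl t) k = fN t k.
Proof. by rewrite ffunE /fN big_mkord; apply: eq_bigr. Qed.

Lemma L6 t u : (fmap (bl t) == fmap (bl u)) = veqN t u.
Proof.
apply/eqP/allP => [E k|H].
  rewrite mem_iota /= => Hk.
  by have := congr1 (fun f : V => f (Ordinal Hk)) E; rewrite /= !L5 => ->.
apply/ffunP => k; rewrite !L5; apply/eqP/H; by rewrite mem_iota /= ltn_ord.
Qed.

Lemma L7 t u : vform (fmap (bl t)) (fmap (bl u)) = vformN t u.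
Proof. rewrite /vform /vformN big_mkord; apply: eq_bigr => k _; by rewrite !L5. Qed.

Lemma L8 t u : nagree (fmap (bl t)) (fmap (bl u)) = nagN t u.
Proof.
rewrite /nagree /nagN big_mkord -sum1_card; apply: eq_bigl => k.
by rewrite inE !L5.
Qed.

Lemma bl_eq (b : 'I_6 -> nat) : b = bl [seq b (inord i) | i <- iota 0 6].
Proof.
apply: functional_extensionality => i.
change (b i = nth 0%nat [seq b (inord i) | i <- iota 0 6] i); rewrite (nth_map 0%nat) ?size_iota ?ltn_ord // nth_iota ?ltn_ord //.
by rewrite add0n inord_val.
Qed.

Lemma bnd (b : 'I_6 -> nat) : is_pos_root b -> forall i, (b i <= 3)%nat.
Proof.
move=> Hb; have := Hb; rewrite {1}(bl_eq b) L2 => /andP[_ /eqP H]; clear Hb.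
rewrite /formN !bigop.unlock /gramN /e6_edge /= in H.
have := boundZ (Z.of_nat (b (inord 0))) (Z.of_nat (b (inord 1))) (Z.of_nat (b (inord 2)))
  (Z.of_nat (b (inord 3))) (Z.of_nat (b (inord 4))) (Z.of_nat (b (inord 5))).
unfold qZ.
move=> HB.
have {HB} : (Z.le (Z.of_nat (b (inord 0))) 3 /\ Z.le (Z.of_nat (b (inord 1))) 3 /\ Z.le (Z.of_nat (b (inord 2))) 3 /\
  Z.le (Z.of_nat (b (inord 3))) 3 /\ Z.le (Z.of_nat (b (inord 4))) 3 /\ Z.le (Z.of_nat (b (inord 5))) 3).
  apply: HB. lia.
move=> HB i; rewrite -(inord_val i).
case: i => [[|[|[|[|[|[|k]]]]]] Hk] //=; lia.
Qed.

Fixpoint tuples (n : nat) : seq (seq nat) :=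
  if n is n'.+1 then [seq x :: t | x <- iota 0 4, t <- tuples n'] else [:: [::]].
Definition Lroots := [seq t <- tuples 6 | posN t].
Definition RL : seq (seq nat) :=
 [:: [:: 0; 0; 0; 0; 0; 1]; [:: 0; 0; 0; 0; 1; 0];
      [:: 0; 0; 0; 0; 1; 1]; [:: 0; 0; 0; 1; 0; 0];
      [:: 0; 0; 0; 1; 1; 0]; [:: 0; 0; 0; 1; 1; 1];
      [:: 0; 0; 1; 0; 0; 0]; [:: 0; 0; 1; 1; 0; 0];
      [:: 0; 0; 1; 1; 1; 0]; [:: 0; 0; 1; 1; 1; 1];
      [:: 0; 1; 0; 0; 0; 0]; [:: 0; 1; 0; 1; 0; 0];
      [:: 0; 1; 0; 1; 1; 0]; [:: 0; 1; 0; 1; 1; 1];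
      [:: 0; 1; 1; 1; 0; 0]; [:: 0; 1; 1; 1; 1; 0];
      [:: 0; 1; 1; 1; 1; 1]; [:: 0; 1; 1; 2; 1; 0];
      [:: 0; 1; 1; 2; 1; 1]; [:: 0; 1; 1; 2; 2; 1];
      [:: 1; 0; 0; 0; 0; 0]; [:: 1; 0; 1; 0; 0; 0];
      [:: 1; 0; 1; 1; 0; 0]; [:: 1; 0; 1; 1; 1; 0];
      [:: 1; 0; 1; 1; 1; 1]; [:: 1; 1; 1; 1; 0; 0];
      [:: 1; 1; 1; 1; 1; 0]; [:: 1; 1; 1; 1; 1; 1];
      [:: 1; 1; 1; 2; 1; 0]; [:: 1; 1; 1; 2; 1; 1];
      [:: 1; 1; 1; 2; 2; 1]; [:: 1; 1; 2; 2; 1; 0];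
      [:: 1; 1; 2; 2; 1; 1]; [:: 1; 1; 2; 2; 2; 1];
      [:: 1; 1; 2; 3; 2; 1]; [:: 1; 2; 2; 3; 2; 1]]%nat.

Lemma Lroots_eq : Lroots = RL.
Proof. rewrite /Lroots /posN /formN !bigop.unlock. vm_compute. reflexivity. Qed.

Definition Pc s t u := if inDN s t && inDN s u && ~~ veqN t u then
   ((vformN t u == 0) == (nagN t u == 1%nat)) else true.

Lemma check : all (fun s => all (fun t => if inDN s t then all (fun u => Pc s t u) RL else true) RL) [:: 1; 3; 4; 5; 6]%nat.
Proof.
rewrite /Pc /inDN /posN /formN /mrootN /veqN /vformN /nagN /fN !bigop.unlock.
vm_compute. reflexivity.
Qed.

Lemma mem_tuples n t : size t = n -> all (fun x => x < 4)%nat t -> t \in tuples n.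
Proof.
elim: n t => [|n IH] [|x t] //= [Hs] /andP[Hx Ht].
change (x :: t \in [seq y :: u | y <- iota 0 4, u <- tuples n]). apply/allpairsP; exists (x, t); split; [by rewrite mem_iota | exact: IH | by []].
Qed.

Lemma inRL (b : 'I_6 -> nat) : is_pos_root b -> [seq b (inord i) | i <- iota 0 6] \in RL.
Proof.
move=> Hb; rewrite -Lroots_eq mem_filter; apply/andP; split.
  by rewrite -L2 -bl_eq.
apply: mem_tuples; first by rewrite size_map size_iota.
apply/allP => x /mapP [i _ ->]; rewrite ltnS; exact: bnd.
Qed.

Lemma main_t s t u : s \in [:: 1; 3; 4; 5; 6]%nat -> t \in RL -> u \in RL ->
  in_Delta s (bl t) -> in_Delta s (bl u) -> fmap (bl t) != fmap (bl u) ->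
  (vform (fmap (bl t)) (fmap (bl u)) = 0) <-> (nagree (fmap (bl t)) (fmap (bl u)) = 1%nat).
Proof.
move=> Hs Ht Hu; rewrite !L4 L6 L7 L8 => Hb Hc Hne.
have := check; move/allP/(_ s Hs)/allP/(_ _ Ht); rewrite Hb => /allP/(_ _ Hu).
rewrite /Pc Hb Hc Hne /= => /eqP E.
split => /eqP H; apply/eqP; by [rewrite -E | rewrite E].
Qed.

Theorem mainTheorem16 (s : nat) (b c : 'I_6 -> nat) :
  s \in [:: 1; 3; 4; 5; 6]%N ->
  in_Delta s b -> in_Delta s c ->
  fmap b != fmap c ->
  (vform (fmap b) (fmap c) = 0) <-> (nagree (fmap b) (fmap c) = 1%N).
Proof.
move=> Hs Hb Hc.
have Rb : [seq b (inord i) | i <- iota 0 6] \in RL by apply: inRL; case/andP: Hb.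
have Rc : [seq c (inord i) | i <- iota 0 6] \in RL by apply: inRL; case/andP: Hc.
move: Hb Hc; rewrite (bl_eq b) (bl_eq c).
exact: (main_t Hs Rb Rc).
Qed.
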